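(* Let $M\ge1$. There exist two languages $L_1,L_2$ and an enumeration $x_{1:\infty}$ which, for each $K\in\{L_1,L_2\}$, is an $M$-bounded displacement enumeration with respect to $K$ and an enumeration of $K$ with $o(1)$-noise, such that any set-based generator that generates in the limit from the target $K$ (for either possible target $K\in\{L_1,L_2\}$) on this enumeration achieves set-based upper density at most $1/M$ (for some choice of the target).
   Context: The universe is $U=\mathbb{N}$ with its natural order; a language is an infinite subset of $U$ with canonical enumeration $\ell_1<\ell_2<\cdots$. For $A,B\subseteq\mathbb{N}$ with $B=\{b_1<b_2<\cdots\}$, $\mu_{\rm low}(A,B)=\liminf_n\frac1n|A\cap\{b_1,\dots,b_n\}|$. For $x\in U$, $\sigma(x,L)=j$ if $x=\ell_j$ and $0$ if $x\notin L$; $x_{1:\infty}$ is an $M$-bounded displacement enumeration with respect to $L$ if there is $n^\star$ with $\sigma(x_n,L)\le Mn$ for all $n\ge n^\star$. An enumeration of $L$ with $o(1)$-noise is a sequence of distinct elements listing every element of $L$ with $\frac1n|\{t\le n:x_t\notin L\}|\to0$. A set-based generator outputs, from $x_1,\dots,x_n$ and knowledge of $\{L_1,L_2\}$ (not $K$), a set $A_n\subseteq U\setminus\{x_1,\dots,x_n\}$; it generates in the limit from $K$ if $A_n\subseteq K$ for all large $n$; its set-based upper density is $\limsup_n\mu_{\rm low}(A_n,K)$. *)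

(* Defs.v *)
From Stdlib Require Import Reals Lra List Arith ClassicalDescription.
From Coquelicot Require Import Coquelicot.
Open Scope R_scope.

(* Sequences x_1, x_2, ... are represented 0-based:
   x_t (t >= 1) is [x (t-1)].  Likewise the canonical enumeration
   l_1 < l_2 < ... of a language is [l 0 < l 1 < ...], i.e. l_j = l (j-1). *)

Fixpoint countP (P : nat -> Prop) (n : nat) : nat :=
  match n with
  | O => O
  | S k => (countP P k + if excluded_middle_informative (P k) then 1 else 0)%nat
  end.

Definition language (L : nat -> Prop) : Prop :=
  forall n : nat, exists m : nat, (n <= m)%nat /\ L m.

Definition canonical_enum (L : nat -> Prop) (l : nat -> nat) : Prop :=
  (forall j, (l j < l (S j))%nat) /\ (forall y, L y <-> exists j, l j = y).

Definition sigma_rel (L : nat -> Prop) (l : nat -> nat) (y j : nat) : Prop :=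
  (L y /\ (1 <= j)%nat /\ l (j - 1)%nat = y) \/ (~ L y /\ j = 0%nat).

Definition bounded_displacement (M : R) (L : nat -> Prop) (l : nat -> nat)
    (x : nat -> nat) : Prop :=
  exists nstar : nat, forall n : nat, (nstar <= n)%nat -> (1 <= n)%nat ->
    forall j : nat, sigma_rel L l (x (n - 1)%nat) j -> INR j <= M * INR n.

Definition noisy_enum (L : nat -> Prop) (x : nat -> nat) : Prop :=
  (forall s t, x s = x t -> s = t) /\
  (forall y, L y -> exists t, x t = y) /\
  is_lim_seq (fun n => INR (countP (fun t => ~ L (x t)) n) / INR n) 0.

(* mu_low(A, B) where b is the canonical enumeration of B *)
Definition mu_low (A : nat -> Prop) (b : nat -> nat) : Rbar :=
  LimInf_seq (fun n => INR (countP (fun i => A (b i)) n) / INR n).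

Definition prefix (x : nat -> nat) (n : nat) : list nat := map x (seq 0 n).

(* a set-based generator: from the observed prefix it outputs a set of
   unseen elements (it may depend on {L1, L2}, which are fixed before it) *)
Definition set_based_generator (G : list nat -> (nat -> Prop)) : Prop :=
  forall (s : list nat) (y : nat), G s y -> ~ In y s.

Definition generates_in_limit (G : list nat -> (nat -> Prop)) (x : nat -> nat)
    (K : nat -> Prop) : Prop :=
  exists N : nat, forall n : nat, (N <= n)%nat ->
    forall y, G (prefix x n) y -> K y.

Definition upper_density (G : list nat -> (nat -> Prop)) (x : nat -> nat)
    (k : nat -> nat) : Rbar :=
  LimSup_seq (fun n => real (mu_low (G (prefix x n)) k)).

(* Main.v *)
Require Import Defs.
From Stdlib Require Import Reals Lra Lia List Arith ZArith ClassicalDescription Classical ConstructiveEpsilon.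
From Coquelicot Require Import Coquelicot.
Open Scope R_scope.

Lemma countP_mono (P Q : nat -> Prop) n : (forall i, P i -> Q i) -> (countP P n <= countP Q n)%nat.
Proof. intros H; induction n; cbn [countP]; [lia|].
  destruct (excluded_middle_informative (P n)), (excluded_middle_informative (Q n)); try lia.
  exfalso; auto. Qed.

Lemma countP_le_n (P : nat -> Prop) n : (countP P n <= n)%nat.
Proof. induction n; cbn [countP]; [lia|]. destruct (excluded_middle_informative (P n)); lia. Qed.

Lemma countP_ge (P : nat -> Prop) c n : (forall i, (c <= i)%nat -> P i) -> (n - c <= countP P n)%nat.
Proof. intros H; induction n; cbn [countP]; [lia|].
  destruct (excluded_middle_informative (P n)) as [h|h]; [lia|].
  destruct (Nat.le_gt_cases c n) as [h'|h']; [exfalso; auto|lia]. Qed.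

Lemma sm_mono (l : nat -> nat) : (forall j, (l j < l (S j))%nat) -> forall a b, (a <= b)%nat -> (l a <= l b)%nat.
Proof. intros H a b Hab; induction Hab; [lia| specialize (H m); lia]. Qed.
Lemma sm_lt_inv l : (forall j, (l j < l (S j))%nat) -> forall a b, (l a < l b)%nat -> (a < b)%nat.
Proof. intros H a b Hl. destruct (Nat.lt_ge_cases a b); auto. pose proof (sm_mono l H b a H0); lia. Qed.
Lemma sm_inj l : (forall j, (l j < l (S j))%nat) -> forall a b, l a = l b -> a = b.
Proof. intros H a b E. destruct (Nat.lt_total a b) as [h|[h|h]]; auto;
  pose proof (sm_mono l H _ _ h); pose proof (H a); pose proof (H b); lia. Qed.
Lemma sm_ge l : (forall j, (l j < l (S j))%nat) -> forall j, (j <= l j)%nat.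
Proof. intros H j; induction j; [lia|specialize (H j); lia]. Qed.

Lemma count_range l : (forall j, (l j < l (S j))%nat) -> forall K i, (K <= l i)%nat ->
  (countP (fun y => exists j, l j = y) K <= i)%nat.
Proof.
  intros H K. induction K; intros i Hi; cbn [countP]; [lia|].
  destruct (excluded_middle_informative _) as [[i' Hi']|Hn].
  - assert (i' < i)%nat by (apply (sm_lt_inv l H); lia).
    specialize (IHK i' ltac:(lia)). lia.
  - specialize (IHK i ltac:(lia)). lia.
Qed.

Lemma lim_sq (c : nat -> nat) : (forall n, (1 <= n)%nat -> (c n * c n <= 2 * n)%nat) ->
  is_lim_seq (fun n => INR (c n) / INR n) 0.
Proof.
  intros H. apply is_lim_seq_spec. intros eps. destruct eps as [e He]; simpl.
  destruct (INR_unbounded (2 / (e*e))) as [N HN].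
  exists (S N). intros n Hn.
  assert (Hn1: (1 <= n)%nat) by lia. specialize (H n Hn1).
  apply le_INR in H. rewrite !mult_INR in H. simpl (INR 2) in H.
  assert (Hnpos: INR n > 0) by (apply lt_0_INR; lia).
  assert (HnN: INR N <= INR n) by (apply le_INR; lia).
  assert (He2: 2 / (e*e) * (e*e) = 2) by (field; lra).
  assert (Hee: e*e > 0) by nra.
  assert (Hbig: INR n * (e*e) > 2).
  { rewrite <- He2 at 1. apply Rmult_lt_compat_r; lra. }
  pose proof (pos_INR (c n)).
  rewrite Rminus_0_r, Rabs_pos_eq by (apply Rdiv_le_0_compat; lra).
  apply Rmult_lt_reg_r with (INR n); [lra|].
  replace (INR (c n) / INR n * INR n) with (INR (c n)) by (field; lra).
  destruct (Rlt_le_dec (INR (c n)) (e * INR n)) as [h|h]; [lra|].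
  exfalso. assert (INR (c n) * INR (c n) >= e * INR n * (e * INR n)).
  { apply Rle_ge, Rmult_le_compat; nra. }
  assert (INR n * (INR n * (e*e)) > INR n * 2) by (apply Rmult_lt_compat_l; lra).
  nra.
Qed.

Lemma lim_inv_n : is_lim_seq (fun n => / INR n) 0.
Proof.
  apply is_lim_seq_ext with (fun n => INR ((fun _ => 1%nat) n) / INR n).
  - intros n; simpl; unfold Rdiv; ring.
  - apply lim_sq. intros; lia.
Qed.

Lemma liminf_bound (u : nat -> R) (a : R) :
  (forall n, (1 <= n)%nat -> u n <= a + / INR n) -> Rbar_le (LimInf_seq u) a.
Proof.
  intros H.
  assert (E: LimInf_seq (fun n => a + / INR n) = a).
  { apply is_LimInf_seq_unique, is_lim_LimInf_seq.
    replace (Finite a) with (Finite (a + 0)) by (f_equal; ring).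
    apply is_lim_seq_plus'; [apply is_lim_seq_const|apply lim_inv_n]. }
  rewrite <- E. apply LimInf_le. exists 1%nat. exact H.
Qed.

Lemma real_le (r : Rbar) (a : R) : Rbar_le r a -> 0 <= a -> real r <= a.
Proof. destruct r; simpl; intros H1 H2; auto; contradiction. Qed.

Lemma ud_bound (G : list nat -> (nat -> Prop)) x k (a : R) :
  0 <= a ->
  (exists N, forall n, (N <= n)%nat -> Rbar_le (mu_low (G (prefix x n)) k) a) ->
  Rbar_le (upper_density G x k) a.
Proof.
  intros Ha [N HN]. unfold upper_density. rewrite <- (LimSup_seq_const a).
  apply LimSup_le. exists N. intros n Hn. apply real_le; auto.
Qed.

Definition l2f (M : R) (j : nat) : nat := Z.to_nat (up (INR j * M) - 1).

Lemma l2f_spec M j : 0 <= M -> INR j * M - 1 < INR (l2f M j) <= INR j * M.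
Proof.
  intros HM. unfold l2f.
  destruct (archimed (INR j * M)) as [H1 H2].
  assert (H0: 0 <= INR j * M) by (apply Rmult_le_pos; [apply pos_INR|lra]).
  assert (Hz : (0 <= up (INR j * M) - 1)%Z).
  { assert (H: IZR (up (INR j * M)) > 0) by lra. apply lt_IZR in H. lia. }
  rewrite (INR_IZR_INZ (Z.to_nat _)), Z2Nat.id by exact Hz. rewrite minus_IZR. simpl (IZR 1). lra.
Qed.

Lemma l2f_incr M : 1 <= M -> forall j, (l2f M j < l2f M (S j))%nat.
Proof.
  intros HM j. apply INR_lt.
  pose proof (l2f_spec M j ltac:(lra)). pose proof (l2f_spec M (S j) ltac:(lra)).
  rewrite S_INR in *. lra.
Qed.

Definition Sset (M : R) (y : nat) : Prop := exists j, l2f M j = y.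

Lemma count_S_bound M K : 1 <= M -> INR (countP (Sset M) K) * M <= INR K + M.
Proof.
  intros HM. induction K.
  - cbn [countP]. simpl. lra.
  - cbn [countP]. destruct (excluded_middle_informative _) as [[i Hi]|Hn].
    + pose proof (count_range (l2f M) (l2f_incr M HM) K i ltac:(lia)) as Hc.
      change (countP (fun y => exists j, l2f M j = y) K) with (countP (Sset M) K) in Hc.
      apply le_INR in Hc. pose proof (l2f_spec M i ltac:(lra)) as [A B]. rewrite Hi in A.
      rewrite plus_INR, !S_INR. simpl (INR 0).
      assert (INR (countP (Sset M) K) * M <= INR i * M) by (apply Rmult_le_compat_r; lra).
      nra.
    + rewrite Nat.add_0_r, S_INR. lra.
Qed.

Lemma nonS_exists M c : 1 < M -> exists y, (c <= y)%nat /\ ~ Sset M y.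
Proof.
  intros HM. apply NNPP. intros Hno.
  assert (Hall: forall y, (c <= y)%nat -> Sset M y).
  { intros y Hy. apply NNPP. intros Hn. apply Hno. exists y; auto. }
  destruct (INR_unbounded ((INR c + M) / (M - 1))) as [K0 HK0].
  pose proof (countP_ge (Sset M) c (c + K0) Hall) as Hg.
  replace (c + K0 - c)%nat with K0 in Hg by lia. apply le_INR in Hg.
  pose proof (count_S_bound M (c + K0) ltac:(lra)). rewrite plus_INR in H.
  assert (INR K0 * M <= INR c + INR K0 + M).
  { apply Rle_trans with (INR (countP (Sset M) (c + K0)) * M); auto. apply Rmult_le_compat_r; lra. }
  assert (Hq: (INR c + M) / (M - 1) * (M - 1) = INR c + M) by (field; lra).
  assert (INR K0 * (M - 1) > INR c + M).
  { rewrite <- Hq. apply Rmult_lt_compat_r; lra. }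
  lra.
Qed.

Definition nextc (M : R) (c : nat) : nat :=
  match excluded_middle_informative (exists y, (c <= y)%nat /\ ~ Sset M y) with
  | left H => proj1_sig (epsilon_smallest _ (fun y => excluded_middle_informative _) H)
  | right _ => c
  end.

Lemma nextc_spec M c : 1 < M -> (c <= nextc M c)%nat /\ ~ Sset M (nextc M c) /\
  forall y, (c <= y)%nat -> ~ Sset M y -> (nextc M c <= y)%nat.
Proof.
  intros HM. unfold nextc.
  destruct (excluded_middle_informative _) as [H|H].
  - destruct (epsilon_smallest _ _ H) as [n [[A B] C]]; simpl.
    repeat split; auto.
  - exfalso. apply H. apply nonS_exists; auto.
Qed.

Fixpoint comp (M : R) (k : nat) : nat :=
  match k with
  | O => nextc M 0
  | S k' => nextc M (S (comp M k'))
  end.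

Lemma comp_notS M k : 1 < M -> ~ Sset M (comp M k).
Proof. intros HM; destruct k; simpl; apply nextc_spec; auto. Qed.

Lemma comp_incr M k : 1 < M -> (comp M k < comp M (S k))%nat.
Proof. intros HM. simpl. pose proof (nextc_spec M (S (comp M k)) HM). lia. Qed.

Lemma comp_ge M k : 1 < M -> (k <= comp M k)%nat.
Proof. intros HM. apply sm_ge. intros; apply comp_incr; auto. Qed.

Lemma comp_cover M y : 1 < M -> ~ Sset M y -> exists k, comp M k = y.
Proof.
  intros HM Hy.
  assert (Cl: forall k z, ~ Sset M z -> (z < comp M k)%nat -> exists i, comp M i = z).
  { induction k; intros z Hz Hlt.
    - simpl in Hlt. pose proof (nextc_spec M 0 HM) as [_ [_ C]]. specialize (C z ltac:(lia) Hz). lia.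
    - destruct (Nat.lt_total z (comp M k)) as [h|[h|h]].
      + apply IHk; auto.
      + exists k; auto.
      + simpl in Hlt. pose proof (nextc_spec M (S (comp M k)) HM) as [_ [_ C]].
        specialize (C z ltac:(lia) Hz). lia. }
  apply (Cl (S y)); auto. pose proof (comp_ge M (S y) HM). lia.
Qed.

Definition Bk M k := S (comp M k).
Fixpoint U M k := match k with O => O | S k' => (U M k' + Bk M k')%nat end.

Fixpoint dec M (t : nat) : nat * nat :=
  match t with
  | O => (O, O)
  | S t' => let (k, r) := dec M t' in if Nat.ltb r (Bk M k) then (k, S r) else (S k, O)
  end.

Definition xf M (t : nat) : nat :=
  let (k, r) := dec M t in if Nat.ltb r (Bk M k) then l2f M (U M k + r) else comp M k.

Lemma dec_inv M t k r : dec M t = (k, r) -> (r <= Bk M k)%nat /\ t = (U M k + k + r)%nat.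
Proof.
  revert k r. induction t; intros k r H.
  - simpl in H. inversion H. simpl. lia.
  - simpl in H. destruct (dec M t) as [k' r'] eqn:E. destruct (IHt k' r' eq_refl) as [A B].
    destruct (Nat.ltb r' (Bk M k')) eqn:L.
    + apply Nat.ltb_lt in L. inversion H; subst. lia.
    + apply Nat.ltb_ge in L. inversion H; subst. simpl. unfold Bk in *. lia.
Qed.

Lemma U_lt M k k' : (k < k')%nat -> (U M k + Bk M k <= U M k')%nat.
Proof. intros H; induction H; simpl; [lia|]. lia. Qed.

Lemma rep_unique M k r k' r' : (r <= Bk M k)%nat -> (r' <= Bk M k')%nat ->
  (U M k + k + r = U M k' + k' + r')%nat -> k = k' /\ r = r'.
Proof.
  intros H1 H2 E. destruct (Nat.lt_total k k') as [h|[h|h]].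
  - pose proof (U_lt M k k' h). lia.
  - subst; lia.
  - pose proof (U_lt M k' k h). lia.
Qed.

Lemma dec_of M k r : (r <= Bk M k)%nat -> dec M (U M k + k + r) = (k, r).
Proof.
  intros H. destruct (dec M (U M k + k + r)) as [k' r'] eqn:E.
  destruct (dec_inv _ _ _ _ E) as [A B]. destruct (rep_unique M k r k' r' H A B); subst; auto.
Qed.

Lemma U_sq M k : 1 < M -> (k * k <= 2 * U M k)%nat.
Proof. intros HM; induction k; simpl; [lia|]. pose proof (comp_ge M k HM). unfold Bk. nia. Qed.

Lemma xf_at M t k r : dec M t = (k, r) ->
  ((r < Bk M k)%nat /\ xf M t = l2f M (U M k + r)) \/ (r = Bk M k /\ xf M t = comp M k).
Proof.
  intros H. destruct (dec_inv _ _ _ _ H) as [A B]. unfold xf. rewrite H.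
  destruct (Nat.ltb r (Bk M k)) eqn:L.
  - apply Nat.ltb_lt in L. left; auto.
  - apply Nat.ltb_ge in L. right. split; [lia|auto].
Qed.

Lemma xf_inj M : 1 < M -> forall s t, xf M s = xf M t -> s = t.
Proof.
  intros HM s t E.
  destruct (dec M s) as [k r] eqn:Es. destruct (dec M t) as [k' r'] eqn:Et.
  destruct (dec_inv _ _ _ _ Es) as [A1 B1]. destruct (dec_inv _ _ _ _ Et) as [A2 B2].
  destruct (xf_at _ _ _ _ Es) as [[C1 D1]|[C1 D1]];
  destruct (xf_at _ _ _ _ Et) as [[C2 D2]|[C2 D2]]; rewrite D1, D2 in E.
  - apply (sm_inj _ (l2f_incr M ltac:(lra))) in E.
    destruct (Nat.lt_total k k') as [h|[h|h]].
    + pose proof (U_lt M k k' h). lia.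
    + subst. lia.
    + pose proof (U_lt M k' k h). lia.
  - exfalso. apply (comp_notS M k' HM). exists (U M k + r)%nat; auto.
  - exfalso. apply (comp_notS M k HM). exists (U M k' + r')%nat; auto.
  - apply (sm_inj _ (fun j => comp_incr M j HM)) in E. subst. lia.
Qed.

Lemma S_slot M j : exists k r, (r < Bk M k)%nat /\ (U M k + r = j)%nat.
Proof.
  induction j.
  - exists O, O. unfold Bk. simpl. lia.
  - destruct IHj as [k [r [A B]]].
    destruct (Nat.lt_ge_cases (S r) (Bk M k)).
    + exists k, (S r). lia.
    + exists (S k), O. simpl. unfold Bk in *. lia.
Qed.

Lemma xf_cover M : 1 < M -> forall y, exists t, xf M t = y.
Proof.
  intros HM y. destruct (classic (Sset M y)) as [[j Hj]|Hn].
  - destruct (S_slot M j) as [k [r [A B]]].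
    exists (U M k + k + r)%nat. pose proof (dec_of M k r ltac:(lia)) as D.
    destruct (xf_at _ _ _ _ D) as [[_ E]|[E _]]; [rewrite E; subst; auto|lia].
  - destruct (comp_cover M y HM Hn) as [k Hk].
    exists (U M k + k + Bk M k)%nat. pose proof (dec_of M k (Bk M k) ltac:(lia)) as D.
    destruct (xf_at _ _ _ _ D) as [[E _]|[_ E]]; [lia|rewrite E; auto].
Qed.

Lemma xf_bound M : 1 <= M -> forall t, INR (xf M t) + 1 <= M * (INR t + 1).
Proof.
  intros HM t. destruct (dec M t) as [k r] eqn:D.
  destruct (dec_inv _ _ _ _ D) as [A B].
  destruct (xf_at _ _ _ _ D) as [[C E]|[C E]]; rewrite E.
  - pose proof (l2f_spec M (U M k + r) ltac:(lra)) as [_ F].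
    assert (INR (U M k + r) <= INR t) by (apply le_INR; lia).
    pose proof (pos_INR (U M k + r)). nra.
  - assert (INR (S (comp M k)) <= INR t) by (apply le_INR; unfold Bk in C; lia).
    rewrite S_INR in H. pose proof (pos_INR t). nra.
Qed.

Lemma xf_S_index M : 1 < M -> forall t i, l2f M i = xf M t -> (i <= t)%nat.
Proof.
  intros HM t i E. destruct (dec M t) as [k r] eqn:D.
  destruct (dec_inv _ _ _ _ D) as [A B].
  destruct (xf_at _ _ _ _ D) as [[C F]|[C F]]; rewrite F in E.
  - apply (sm_inj _ (l2f_incr M ltac:(lra))) in E. lia.
  - exfalso. apply (comp_notS M k HM). exists i; auto.
Qed.

Lemma noise_count M : 1 < M -> forall t, (countP (fun s => ~ Sset M (xf M s)) t <= fst (dec M t))%nat.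
Proof.
  intros HM t. induction t; [simpl; lia|].
  cbn [countP]. destruct (dec M t) as [k r] eqn:D.
  assert (D1: dec M (S t) = if Nat.ltb r (Bk M k) then (k, S r) else (S k, O)) by (simpl; rewrite D; auto).
  rewrite D1. simpl fst in IHt.
  destruct (xf_at _ _ _ _ D) as [[C E]|[C E]].
  - assert (L: Nat.ltb r (Bk M k) = true) by (apply Nat.ltb_lt; auto). rewrite L. simpl fst.
    destruct (excluded_middle_informative _) as [h|h]; [exfalso; apply h; rewrite E; eexists; eauto|lia].
  - assert (L: Nat.ltb r (Bk M k) = false) by (apply Nat.ltb_ge; lia). rewrite L. simpl fst.
    destruct (excluded_middle_informative _); lia.
Qed.

Lemma noise_sq M : 1 < M -> forall n, (countP (fun s => ~ Sset M (xf M s)) n * countP (fun s => ~ Sset M (xf M s)) n <= 2 * n)%nat.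
Proof.
  intros HM n. pose proof (noise_count M HM n) as H.
  destruct (dec M n) as [k r] eqn:D. destruct (dec_inv _ _ _ _ D) as [A B]. simpl in H.
  pose proof (U_sq M k HM). nia.
Qed.

Lemma countP_none (P : nat -> Prop) n : (forall i, ~ P i) -> countP P n = O.
Proof. intros H; induction n; cbn [countP]; [auto|]. destruct (excluded_middle_informative (P n)) as [h|h]; [exfalso; eapply H; eauto|lia]. Qed.

Lemma countP_le1 n : (countP (fun t => ~ (1 <= t)%nat) n <= 1)%nat.
Proof.
  induction n; cbn [countP]; [lia|].
  destruct (excluded_middle_informative _) as [h|h]; [|lia].
  assert (n = O) by lia. subst. simpl. lia.
Qed.

Lemma ratio_bound (c K : nat) (M : R) : (1 <= K)%nat -> 0 < M -> INR c * M <= INR K + M ->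
  INR c / INR K <= 1 / M + / INR K.
Proof.
  intros HK HM H. assert (Hk: INR K > 0) by (apply lt_0_INR; lia).
  apply (Rmult_le_reg_r (INR K * M)); [nra|].
  replace (INR c / INR K * (INR K * M)) with (INR c * M) by (field; lra).
  replace ((1 / M + / INR K) * (INR K * M)) with (INR K + M) by (field; lra). lra.
Qed.

Theorem theorem7p10 (M : R) (HM : 1 <= M) :
  exists (L1 L2 : nat -> Prop) (l1 l2 : nat -> nat) (x : nat -> nat),
    language L1 /\ language L2 /\ ~ (forall y, L1 y <-> L2 y) /\
    canonical_enum L1 l1 /\ canonical_enum L2 l2 /\
    bounded_displacement M L1 l1 x /\ noisy_enum L1 x /\
    bounded_displacement M L2 l2 x /\ noisy_enum L2 x /\
    forall G : list nat -> (nat -> Prop),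
      set_based_generator G ->
      generates_in_limit G x L1 -> generates_in_limit G x L2 ->
      Rbar_le (upper_density G x l1) (1 / M) \/
      Rbar_le (upper_density G x l2) (1 / M).
Proof.
  destruct (Rle_lt_or_eq_dec 1 M HM) as [HM1|HM1].
  - exists (fun _ => True), (Sset M), (fun n => n), (l2f M), (xf M).
    assert (Hinc := l2f_incr M HM).
    split; [intros n; exists n; split; auto|].
    split; [intros n; exists (l2f M n); split; [apply sm_ge; auto|exists n; auto]|].
    split; [intros H; apply (comp_notS M O HM1); apply H; trivial|].
    split; [split; [intros; lia|intros y; split; [intros; exists y; auto|auto]]|].
    split; [split; [auto|intros y; unfold Sset; tauto]|].
    split.
    { exists O. intros n _ Hn j Hj.
      destruct Hj as [[_ [Hj1 Hj2]]|[Hf _]]; [|contradiction Hf; trivial].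
      destruct n as [|n]; [lia|]. replace (S n - 1)%nat with n in Hj2 by lia.
      replace j with (S (xf M n)) by lia. rewrite !S_INR. apply xf_bound; auto. }
    split.
    { split; [apply xf_inj; auto|]. split; [intros y _; apply xf_cover; auto|].
      apply lim_sq. intros n _. rewrite countP_none; [lia|]. intros i h; apply h; trivial. }
    split.
    { exists O. intros n _ Hn j Hj.
      destruct Hj as [[_ [Hj1 Hj2]]|[_ Hj0]].
      - apply xf_S_index in Hj2; auto.
        assert (INR j <= INR n) by (apply le_INR; lia). pose proof (pos_INR n). nra.
      - subst. simpl. pose proof (pos_INR n). nra. }
    split.
    { split; [apply xf_inj; auto|]. split; [intros y _; apply xf_cover; auto|].
      apply lim_sq. intros n _. apply noise_sq; auto. }
    intros G _ _ [N HN]. left. apply ud_bound; [apply Rlt_le, Rdiv_lt_0_compat; lra|].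
    exists N. intros n Hn. unfold mu_low. apply liminf_bound. intros K HK.
    apply ratio_bound; [auto|lra|].
    pose proof (countP_mono (fun i => G (prefix (xf M) n) i) (Sset M) K (HN n Hn)) as Hc.
    apply le_INR in Hc. pose proof (count_S_bound M K HM).
    apply Rle_trans with (INR (countP (Sset M) K) * M); auto.
    apply Rmult_le_compat_r; lra.
  - subst M.
    exists (fun _ => True), (fun y => (1 <= y)%nat), (fun n => n), S, (fun n => n).
    split; [intros n; exists n; split; auto|].
    split; [intros n; exists (S n); split; lia|].
    split; [intros H; assert (h: (1 <= 0)%nat) by (apply H; trivial); lia|].
    split; [split; [intros; lia|intros y; split; [intros; exists y; auto|auto]]|].
    split; [split; [intros; lia|intros y; split; [intros; exists (y - 1)%nat; lia|intros [j Hj]; lia]]|].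
    split.
    { exists O. intros n _ Hn j Hj.
      destruct Hj as [[_ [Hj1 Hj2]]|[Hf _]]; [|contradiction Hf; trivial].
      replace j with n by lia. lra. }
    split.
    { split; [auto|]. split; [intros y _; exists y; auto|].
      apply lim_sq. intros n _. rewrite countP_none; [lia|]. intros i h; apply h; trivial. }
    split.
    { exists O. intros n _ Hn j Hj.
      destruct Hj as [[_ [Hj1 Hj2]]|[_ Hj0]].
      - assert (INR j <= INR n) by (apply le_INR; lia). lra.
      - subst. simpl. pose proof (pos_INR n). lra. }
    split.
    { split; [auto|]. split; [intros y _; exists y; auto|].
      apply lim_sq. intros n Hn. pose proof (countP_le1 n). nia. }
    intros G _ _ _. left. apply ud_bound; [lra|].
    exists O. intros n _. unfold mu_low. apply liminf_bound. intros K HK.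
    apply ratio_bound; [auto|lra|].
    pose proof (countP_le_n (fun i => G (prefix (fun n0 => n0) n) i) K) as Hc.
    apply le_INR in Hc. lra.
Qed.
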